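(* For every positive integer $n$ and every $k\le n$ there exists an instance of the myopic best-response dynamics described below (a graph with nonnegative embedding weights, features, a linear threshold classifier, and a scaled 2-norm cost) in which $n-k$ users move at round $k$.
   Context: Users $i$ have features $x_i\in\mathbb{R}^\ell$; embeddings $\phi(x_i;x_{-i})=\widetilde{w}_{ii}x_i+\sum_{j\neq i}\widetilde{w}_{ji}x_j$ with $\widetilde{w}_{ji}\ge0$. Classifier: $h_{\theta,b}(x_i;x_{-i})=\mathrm{sign}(\theta^\top\phi(x_i;x_{-i})+b)$, $\mathrm{sign}(0)=+1$. Cost $c_\beta(x,x')=\beta\|x-x'\|_2$ for some $\beta>0$. Dynamics: $x_i^{(0)}=x_i$; at each round $t\ge1$ all users update concurrently; user $i$ changes her features only if she is currently classified $-1$ and some $x'$ with $h(x';x^{(t-1)}_{-i})=+1$ has $c_\beta(x_i^{(t-1)},x')\le2$, in which case she moves to the minimum-cost such point (embedding exactly on the decision boundary); otherwise she stays. User $i$ ''moves at round $t$'' if $x_i^{(t)}\neq x_i^{(t-1)}$. *)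

(* Defs.v *)
From Stdlib Require Import Reals.
From mathcomp Require Import all_boot all_order all_algebra.
From mathcomp Require Import Rstruct.

Set Implicit Arguments.
Unset Strict Implicit.
Unset Printing Implicit Defensive.

Import Order.TTheory GRing.Theory Num.Theory.
Local Open Scope ring_scope.

Definition profile (n l : nat) := 'I_n -> 'rV[R]_l.

Definition dotp (l : nat) (u v : 'rV[R]_l) : R := \sum_(j < l) u 0 j * v 0 j.
Definition enorm (l : nat) (v : 'rV[R]_l) : R := Num.sqrt (\sum_(j < l) v 0 j ^+ 2).

Definition cost (l : nat) (beta : R) (x x' : 'rV[R]_l) : R := beta * enorm (x - x').

(* Embedding phi(x_i; x_{-i}) = sum_j w j i * x_j, where w i i is the
   self-weight \tilde w_{ii} and w j i the weight \tilde w_{ji}. *)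
Definition embed (n l : nat) (w : 'I_n -> 'I_n -> R) (X : profile n l) (i : 'I_n)
  : 'rV[R]_l := \sum_(j < n) w j i *: X j.

(* Classifier h_{theta,b}: true means +1, false means -1 (sign(0) = +1). *)
Definition classif (n l : nat) (w : 'I_n -> 'I_n -> R) (theta : 'rV[R]_l) (b : R)
  (X : profile n l) (i : 'I_n) : bool :=
  0 <= dotp theta (embed w X i) + b.

Definition upd (n l : nat) (X : profile n l) (i : 'I_n) (x' : 'rV[R]_l) : profile n l :=
  fun j => if j == i then x' else X j.

Definition feasible (n l : nat) (w : 'I_n -> 'I_n -> R) (theta : 'rV[R]_l) (b beta : R)
  (X : profile n l) (i : 'I_n) (x' : 'rV[R]_l) : Prop :=
  classif w theta b (upd X i x') i /\ cost beta (X i) x' <= 2.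

Definition br_step (n l : nat) (w : 'I_n -> 'I_n -> R) (theta : 'rV[R]_l) (b beta : R)
  (X Y : profile n l) : Prop :=
  forall i : 'I_n,
    if classif w theta b X i then Y i = X i
    else
      ((exists x', feasible w theta b beta X i x') ->
          classif w theta b (upd X i (Y i)) i /\
          cost beta (X i) (Y i) <= 2 /\
          (forall x', classif w theta b (upd X i x') i ->
                      cost beta (X i) (Y i) <= cost beta (X i) x'))
      /\ (~ (exists x', feasible w theta b beta X i x') -> Y i = X i).

Definition is_run (n l : nat) (w : 'I_n -> 'I_n -> R) (theta : 'rV[R]_l) (b beta : R)
  (X0 : profile n l) (traj : nat -> profile n l) : Prop :=
  traj 0%N = X0 /\ forall t : nat, br_step w theta b beta (traj t) (traj t.+1).

Definition movers (n l : nat) (traj : nat -> profile n l) (t : nat) : nat :=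
  #|[set i : 'I_n | traj t i != traj t.-1 i]|.

(* Main.v *)
Require Import Defs.
From Stdlib Require Import Reals FunctionalExtensionality.
From mathcomp Require Import all_boot all_order all_algebra.
From mathcomp Require Import Rstruct zify ring lra.
Import Order.TTheory GRing.Theory Num.Theory.
Local Open Scope ring_scope.

Section S.
Variables (m k : nat).
Hypothesis k1 : (1 <= k)%N.
Hypothesis km : (k <= m.+1)%N.

Definition pr (i : 'I_m.+1) : 'I_m.+1 := inord (minn i.-1 k.-1).
Definition ww (j i : 'I_m.+1) : R :=
  if (j == i) || ((i != 0 :> nat) && (j == pr i)) then GRing.one _ else GRing.zero.
Definition th : 'rV[R]_1 := const_mx 1.
Definition lv (i : 'I_m.+1) : nat := minn i k.
Definition vl (t : nat) (i : 'I_m.+1) : R := if (lv i <= t)%N then GRing.zero else GRing.opp 2%:R.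
Definition b0 : R := GRing.zero.
Definition be : R := GRing.one _.
Definition F (t : nat) : profile m.+1 1 := fun i => const_mx (vl t i).

Lemma pr_val (i : 'I_m.+1) : (i != 0 :> nat) -> (pr i : nat) = minn i.-1 k.-1.
Proof. move=> i0; rewrite inordK //; have := ltn_ord i; lia. Qed.

Lemma pr_neq (i : 'I_m.+1) : (i != 0 :> nat) -> pr i != i.
Proof. move=> i0; apply/eqP => /(congr1 val) /=; rewrite pr_val //; lia. Qed.

Arguments pr_neq {i}.

Lemma lv_pr (i : 'I_m.+1) : (i != 0 :> nat) -> lv (pr i) = (lv i).-1.
Proof. move=> i0; rewrite /lv pr_val //; lia. Qed.

Definition q (X : profile m.+1 1) (i : 'I_m.+1) : R :=
  if (i == 0 :> nat) then GRing.zero else X (pr i) 0 0.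

Lemma embed_val (X : profile m.+1 1) i : (embed ww X i) 0 0 = X i 0 0 + q X i.
Proof.
rewrite /embed summxE (bigD1 i) //= !mxE /ww eqxx /= mul1r /q.
case: eqP => [i0|/eqP i0].
  rewrite big1 ?addr0 // => j /negbTE ->; rewrite /= !mxE.
  by rewrite mul0r.
rewrite (bigD1 (pr i)) /=; last exact: pr_neq.
rewrite !mxE (negbTE (pr_neq i0)) eqxx /= big1; first by rewrite addr0; simpl; lra.
by move=> j /andP[/negbTE -> /negbTE ->]; rewrite !mxE /= mul0r.
Qed.

Lemma classif_val (X : profile m.+1 1) i :
  classif ww th b0 X i = (0 <= X i 0 0 + q X i).
Proof.
rewrite /classif /dotp big_ord1 /b0 addr0 embed_val mxE. by rewrite GRing.mul1r.
Qed.

Lemma classif_upd (X : profile m.+1 1) i x :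
  classif ww th b0 (upd X i x) i = (0 <= x 0 0 + q X i).
Proof.
rewrite classif_val /upd eqxx /q; case: eqP => // /eqP i0.
by rewrite (negbTE (pr_neq i0)).
Qed.

Lemma cost_val (x y : 'rV[R]_1) : cost be x y = `|x 0 0 - y 0 0|.
Proof. rewrite /cost /enorm /be; change (Rmult ?a ?c) with (@GRing.mul _ a c); by rewrite mul1r big_ord1 sqrtr_sqr !mxE. Qed.

Lemma F00 t (i : 'I_m.+1) : F t i 0 0 = vl t i.
Proof. by rewrite mxE. Qed.

Lemma qF t (i : 'I_m.+1) : q (F t) i = if (i == 0 :> nat) then GRing.zero else vl t (pr i).
Proof. by rewrite /q F00. Qed.

Lemma row1_eq (x y : 'rV[R]_1) : x 0 0 = y 0 0 -> x = y.
Proof. by move=> h; apply/rowP => j; rewrite ord1. Qed.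

Lemma step t Y : br_step ww th b0 be (F t) Y -> forall i, Y i = F t.+1 i.
Proof.
move=> H i; have := H i; rewrite classif_val qF F00 /vl.
have [h1|h1] := leqP (lv i) t.
  case: eqP => [i0|/eqP i0].
    by rewrite addr0 lexx => ->; rewrite /F /vl h1 (leq_trans h1).
  have e : ((lv i).-1 <= t)%N by lia.
  rewrite lv_pr // e.
  by rewrite addr0 lexx => ->; rewrite /F /vl h1 (leq_trans h1).
have i0 : (i != 0 :> nat) by move: h1; rewrite /lv; lia.
rewrite (negbTE i0).
have [h2|h2] := eqVneq (lv i) t.+1.
  rewrite lv_pr // h2 /= leqnn.
  rewrite ifF; last by apply/negbTE; rewrite -ltNge; lra.
  case=> [Hf _].
  have ex : exists x', feasible ww th b0 be (F t) i x'.
    exists (const_mx 0); split.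
      by rewrite classif_upd qF (negbTE i0) /vl lv_pr // h2 /= leqnn mxE addr0.
    by rewrite cost_val !mxE /vl leqNgt h1 /= subr0 normrN normr_nat.
  have [Hc [Hcost _]] := Hf ex.
  move: Hc Hcost; rewrite classif_upd qF (negbTE i0) /vl lv_pr // h2 /= leqnn.
  rewrite cost_val F00 /vl leqNgt h1 /= => Hc Hcost.
  apply: row1_eq; rewrite F00 /vl h2 leqnn.
  move: Hcost; rewrite ler_norml; move: Hc; lra.
have e : ((lv i).-1 <= t)%N = false by apply/negbTE; rewrite -ltnNge; lia.
rewrite lv_pr // e.
rewrite ifF; last by apply/negbTE; rewrite -ltNge; lra.
case=> [_ Hn]; rewrite Hn; last first.
  case=> x [Hc Hcost]; move: Hc Hcost.
  rewrite classif_upd qF (negbTE i0) /vl lv_pr // e.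
  rewrite cost_val F00 /vl leqNgt h1 /= ler_norml; lra.
by rewrite /F /vl leqNgt h1 /= leqNgt ltn_neqAle h1 andbT eq_sym h2.
Qed.

Lemma exist t : br_step ww th b0 be (F t) (F t.+1).
Proof.
move=> i; rewrite classif_val qF F00 /vl.
have [h1|h1] := leqP (lv i) t.
  case: eqP => [i0|/eqP i0].
    by rewrite addr0 lexx /F /vl h1 (leq_trans h1).
  have e : ((lv i).-1 <= t)%N by lia.
  by rewrite lv_pr // e addr0 lexx /F /vl h1 (leq_trans h1).
have i0 : (i != 0 :> nat) by move: h1; rewrite /lv; lia.
rewrite (negbTE i0).
have [h2|h2] := eqVneq (lv i) t.+1.
  rewrite lv_pr // h2 /= leqnn.
  rewrite ifF; last by apply/negbTE; rewrite -ltNge; lra.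
  split; last first.
    move=> nex; exfalso; apply: nex; exists (const_mx 0); split.
      by rewrite classif_upd qF (negbTE i0) /vl lv_pr // h2 /= leqnn mxE addr0.
    by rewrite cost_val !mxE /vl leqNgt h1 /= subr0 normrN normr_nat.
  move=> _; split.
    by rewrite classif_upd qF (negbTE i0) /vl lv_pr // h2 /= leqnn F00 /vl h2 leqnn addr0.
  split.
    by rewrite cost_val !F00 /vl leqNgt h1 /= h2 leqnn subr0 normrN normr_nat.
  move=> x'; rewrite classif_upd qF (negbTE i0) /vl lv_pr // h2 /= leqnn.
  rewrite !cost_val !F00 /vl leqNgt h1 /= h2 leqnn addr0 subr0 normrN normr_nat => Hx.
  rewrite ler_normr; apply/orP; right; lra.
have e : ((lv i).-1 <= t)%N = false by apply/negbTE; rewrite -ltnNge; lia.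
rewrite lv_pr // e.
rewrite ifF; last by apply/negbTE; rewrite -ltNge; lra.
split.
  case=> x [Hc Hcost]; exfalso; move: Hc Hcost.
  rewrite classif_upd qF (negbTE i0) /vl lv_pr // e.
  rewrite cost_val F00 /vl (leqNgt (lv i)) h1 /= ler_norml; lra.
by move=> _; rewrite /F /vl (leqNgt (lv i) t) h1 /= (leqNgt (lv i) t.+1) ltn_neqAle h1 andbT eq_sym h2.
Qed.

Lemma F_diff (i : 'I_m.+1) : (F k i != F k.-1 i) = (k <= i)%N.
Proof.
rewrite /F /vl (_ : (lv i <= k)%N); last by rewrite /lv geq_minr.
case: (leqP k i) => hk.
  rewrite (_ : (lv i <= k.-1)%N = false); last by apply/negbTE; rewrite -ltnNge /lv; lia.
  by apply/eqP => /(congr1 (fun M : 'rV[R]_1 => M 0 0)); rewrite !mxE => /eqP; rewrite eq_sym oppr_eq0 pnatr_eq0.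
rewrite (_ : (lv i <= k.-1)%N = true); last by rewrite /lv; lia.
by rewrite eqxx.
Qed.

End S.

Lemma card_ge (n k : nat) : (k <= n)%N -> #|[set i : 'I_n | (k <= i)%N]| = (n - k)%N.
Proof.
move=> kn.
rewrite -sum1_card big_mkcond /=.
under eq_bigr => i _ do rewrite inE.
rewrite -(big_mkord xpredT (fun i => if (k <= i)%N then 1%N else 0%N)).
rewrite (big_cat_nat (leq0n k) kn) /=.
rewrite big1_seq; last by move=> i /andP[_]; rewrite mem_index_iota => /andP[_ H]; rewrite leqNgt H.
rewrite add0n big_seq_cond (eq_bigr (fun _ => 1%N)); last first.
  by move=> i /andP[]; rewrite mem_index_iota => /andP[->].
by rewrite -big_seq_cond sum_nat_const_nat muln1.
Qed.

Theorem proposition4 (n k : nat) :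
  (0 < n)%N -> (1 <= k)%N -> (k <= n)%N ->
  exists (l : nat) (w : 'I_n -> 'I_n -> R) (X0 : profile n l)
         (theta : 'rV[R]_l) (b beta : R),
    (forall i j : 'I_n, 0 <= w i j) /\ 0 < beta /\
    (exists traj : nat -> profile n l, is_run w theta b beta X0 traj) /\
    (forall traj : nat -> profile n l, is_run w theta b beta X0 traj ->
       movers traj k = (n - k)%N).
Proof.
case: n => [//|m] _ k1 km.
exists 1%N, (ww m k), (F m k 0), th, b0, be.
split.
  by move=> i j; rewrite /ww; case: ifP => _; [exact: ler01|exact: lexx].
split; first exact: ltr01.
split.
  by exists (F m k); split => // t; exact: exist.
move=> traj [H0 Hs].
have HT : forall t i, traj t i = F m k t i.
  elim=> [|t IH] i; first by rewrite H0.
  have E : traj t = F m k t by apply: functional_extensionality.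
  by have := Hs t; rewrite E => /step ->.
rewrite /movers.
have -> : [set i | traj k i != traj k.-1 i] = [set i : 'I_m.+1 | (k <= i)%N].
  by apply/setP => i; rewrite !inE !HT F_diff.
exact: card_ge.
Qed.
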